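(* Let $P:\mathbb{Z}\times[2]\to\mathbb{R}^2$ be a circular net such that for each $j\in[2]$ the points $\{P_{i,j}\}_{i\in\mathbb{Z}}$ lie on a line $\mathcal{H}_j$. For $i\in\mathbb{Z}$ let $\mathcal{V}_i$ be the line $P_{i,1}\vee P_{i,2}$. Then the lines $\{\mathcal{V}_{2i}\}_{i\in\mathbb{Z}}$ are parallel, and the lines $\{\mathcal{V}_{2i+1}\}_{i\in\mathbb{Z}}$ are parallel.
   Context: $[2]=\{1,2\}$. A circular net $P:\mathbb{Z}\times[2]\to\mathbb{R}^2$ is a map such that for all $i$ the four points $P_{i,1},P_{i+1,1},P_{i+1,2},P_{i,2}$ lie on a circle. $X\vee Y$ denotes the line through $X$ and $Y$. Standing assumption: all data are generic (in general position subject to the stated constraints). *)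

(* Defs.v *)
(* Points of the plane R^2 are pairs (x, y) over an
   arbitrary real field R (the statement is purely algebraic). *)
From mathcomp Require Import all_boot all_order all_algebra.
Set Implicit Arguments.
Unset Strict Implicit.
Unset Printing Implicit Defensive.
Import Order.TTheory GRing.Theory Num.Theory.
Local Open Scope ring_scope.

Section Plane.
Variable R : realFieldType.

Definition pt := (R * R)%type.

Definition dist2 (a b : pt) : R := (a.1 - b.1) ^+ 2 + (a.2 - b.2) ^+ 2.

Definition cross4 (a b c d : pt) : R :=
  (b.1 - a.1) * (d.2 - c.2) - (b.2 - a.2) * (d.1 - c.1).

Definition concyclic (a b c d : pt) : Prop :=
  exists (o : pt) (r : R), 0 < r /\
    dist2 a o = r ^+ 2 /\ dist2 b o = r ^+ 2 /\
    dist2 c o = r ^+ 2 /\ dist2 d o = r ^+ 2.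

Definition on_a_line (Q : int -> pt) : Prop :=
  exists (p v : pt), v != (0, 0) /\
    forall i, exists t : R, Q i = (p.1 + t * v.1, p.2 + t * v.2).

Definition parallel_lines (a b c d : pt) : Prop := cross4 a b c d = 0.

End Plane.

(* [2] = {1,2}, represented by 'I_2 = {0,1} *)
Definition j1 : 'I_2 := @Ordinal 2 0 isT.
Definition j2 : 'I_2 := @Ordinal 2 1 isT.

Definition circular_net (R : realFieldType) (P : int -> 'I_2 -> pt R) : Prop :=
  forall i : int, concyclic (P i j1) (P (i + 1) j1) (P (i + 1) j2) (P i j2).

Definition generic_net (R : realFieldType) (P : int -> 'I_2 -> pt R) : Prop :=
  forall (i k : int) (j l : 'I_2), P i j = P k l -> i = k /\ j = l.

(* Main.v *)
Require Import Defs.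
From mathcomp Require Import all_boot all_order all_algebra.
From mathcomp Require Import ring lra zify.
Set Implicit Arguments. Unset Strict Implicit. Unset Printing Implicit Defensive.
Import Order.TTheory GRing.Theory Num.Theory.
Local Open Scope ring_scope.

Definition cm (R : realFieldType) (a b : pt R) : pt R :=
  (a.1 * b.1 - a.2 * b.2, a.1 * b.2 + a.2 * b.1).
Definition cj (R : realFieldType) (a : pt R) : pt R := (a.1, - a.2).
Definition sub (R : realFieldType) (a b : pt R) : pt R := (a.1 - b.1, a.2 - b.2).
Definition imq (R : realFieldType) (A B E D : pt R) : R :=
  (cm (cm (sub D A) (sub E B)) (cm (cj (sub B A)) (cj (sub E D)))).2.
Definition det3 (R : realFieldType) (P Q S : pt R) : R :=
  P.1 * (Q.2 - S.2) - P.2 * (Q.1 - S.1) + (Q.1 * S.2 - Q.2 * S.1).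
Definition lp (R : realFieldType) (p u : pt R) (t : R) : pt R :=
  (p.1 + t * u.1, p.2 + t * u.2).
Definition crossv (R : realFieldType) (x y : pt R) : R := x.1 * y.2 - x.2 * y.1.

Lemma cyc_im (R : realFieldType) (A B E D o : pt R) (r : R) :
  dist2 A o = r ^+ 2 -> dist2 B o = r ^+ 2 -> dist2 E o = r ^+ 2 ->
  dist2 D o = r ^+ 2 -> imq A B E D = 0.
Proof.
move=> hA hB hE hD.
have id : imq A B E D = (dist2 A o - r ^+ 2) * det3 B E D
   - (dist2 B o - r ^+ 2) * det3 A E D + (dist2 E o - r ^+ 2) * det3 A B D
   - (dist2 D o - r ^+ 2) * det3 A B E.
  case: A {hA} => a1 a2; case: B {hB} => b1 b2; case: E {hE} => e1 e2;
  case: D {hD} => d1 d2; case: o => o1 o2.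
  rewrite /imq /cm /cj /sub /det3 /dist2 /=; ring.
by rewrite id hA hB hE hD !subrr !mul0r !subrr add0r subrr.
Qed.

Lemma sub0_eq (R : realFieldType) (x y : pt R) : sub x y = (0, 0) -> x = y.
Proof.
case: x => x1 x2; case: y => y1 y2; by rewrite /sub /= => -[/subr0_eq -> /subr0_eq ->].
Qed.

Lemma pos_norm (R : realFieldType) (x : pt R) : x != (0, 0) -> 0 < x.1 ^+ 2 + x.2 ^+ 2.
Proof.
case: x => x1 x2 /= hx.
have [h1|h1] := eqVneq x1 0.
  subst; have h2 : x2 != 0 by apply: contraNneq hx => ->.
  by rewrite expr0n add0r lt0r sqr_ge0 sqrf_eq0 andbT.
by rewrite ltr_pwDl ?sqr_ge0 // lt0r sqr_ge0 sqrf_eq0 andbT.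
Qed.

Lemma norm_pos_nz (R : realFieldType) (x : pt R) : 0 < x.1 ^+ 2 + x.2 ^+ 2 -> x != (0, 0).
Proof.
case: x => x1 x2 /= h; apply/eqP => -[e1 e2]; move: h.
by rewrite e1 e2 expr0n /= addr0 ltxx.
Qed.

Lemma kernel (R : realFieldType) (x y z : pt R) :
  x.1 * z.2 + x.2 * z.1 = 0 -> y.1 * z.2 + y.2 * z.1 = 0 -> z != (0, 0) ->
  x.1 * y.2 - x.2 * y.1 = 0.
Proof.
case: x => x1 x2; case: y => y1 y2; case: z => z1 z2 /= h1 h2 hz.
have e1 : z2 * (x1 * y2 - x2 * y1) = y2 * (x1 * z2 + x2 * z1) - x2 * (y1 * z2 + y2 * z1)
  by ring.
have e2 : z1 * (x1 * y2 - x2 * y1) = x1 * (y1 * z2 + y2 * z1) - y1 * (x1 * z2 + x2 * z1)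
  by ring.
rewrite h1 h2 !mulr0 subrr in e1 e2.
have [//|hd] := eqVneq (x1 * y2 - x2 * y1) 0.
move/eqP: e1; rewrite mulf_eq0 (negbTE hd) orbF => /eqP ez2.
move/eqP: e2; rewrite mulf_eq0 (negbTE hd) orbF => /eqP ez1.
by move: hz; rewrite ez1 ez2 eqxx.
Qed.

Lemma c1_id (R : realFieldType) (p q u v : pt R) (a b d e : R) :
  imq (lp p u a) (lp p u b) (lp q v e) (lp q v d) =
   (b - a) * (e - d) * (cm (sub (lp q v d) (lp p u a))
      (cm (cm (sub (lp q v e) (lp p u b)) (cj u)) (cj v))).2.
Proof.
case: p => p1 p2; case: q => q1 q2; case: u => u1 u2; case: v => v1 v2.
rewrite /imq /cm /cj /sub /lp /=; ring.
Qed.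

Lemma c2_id (R : realFieldType) (p q u v : pt R) (b c e f : R) :
  imq (lp p u b) (lp p u c) (lp q v f) (lp q v e) =
   (c - b) * (f - e) * (cm (sub (lp q v f) (lp p u c))
      (cm (cm (sub (lp q v e) (lp p u b)) (cj u)) (cj v))).2.
Proof.
case: p => p1 p2; case: q => q1 q2; case: u => u1 u2; case: v => v1 v2.
rewrite /imq /cm /cj /sub /lp /=; ring.
Qed.

Lemma step (R : realFieldType) (p q u v : pt R) (a b c d e f : R) :
  u != (0, 0) -> v != (0, 0) ->
  imq (lp p u a) (lp p u b) (lp q v e) (lp q v d) = 0 ->
  imq (lp p u b) (lp p u c) (lp q v f) (lp q v e) = 0 ->
  lp p u a != lp p u b -> lp p u b != lp p u c ->
  lp q v d != lp q v e -> lp q v e != lp q v f -> lp p u b != lp q v e ->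
  crossv (sub (lp q v d) (lp p u a)) (sub (lp q v f) (lp p u c)) = 0.
Proof.
move=> hu hv h1 h2 nab nbc nde nef nbe.
have ab : b - a != 0 by rewrite subr_eq0; apply: contraNneq nab => ->.
have bc : c - b != 0 by rewrite subr_eq0; apply: contraNneq nbc => ->.
have de : e - d != 0 by rewrite subr_eq0; apply: contraNneq nde => ->.
have ef : f - e != 0 by rewrite subr_eq0; apply: contraNneq nef => ->.
have nl : sub (lp q v e) (lp p u b) != (0, 0).
  by apply: contra nbe => /eqP /sub0_eq ->.
pose z := cm (cm (sub (lp q v e) (lp p u b)) (cj u)) (cj v).
have c1 := c1_id p q u v a b d e.
have c2 := c2_id p q u v b c e f.
have nz : z != (0, 0).
  apply: norm_pos_nz.
  have -> : z.1 ^+ 2 + z.2 ^+ 2 =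
    ((sub (lp q v e) (lp p u b)).1 ^+ 2 + (sub (lp q v e) (lp p u b)).2 ^+ 2) *
    (u.1 ^+ 2 + u.2 ^+ 2) * (v.1 ^+ 2 + v.2 ^+ 2).
    rewrite /z; move: (sub _ _) => l.
    clear; case: l => l1 l2; case: u => u1 u2; case: v => v1 v2.
    rewrite /cm /cj /=; ring.
  by rewrite !mulr_gt0 // pos_norm.
apply: (kernel _ _ nz).
  move/eqP: h1; rewrite c1 !mulf_eq0 (negbTE ab) (negbTE de) /= => /eqP.
  by rewrite /cm /=.
move/eqP: h2; rewrite c2 !mulf_eq0 (negbTE bc) (negbTE ef) /= => /eqP.
by rewrite /cm /=.
Qed.

Lemma trans_par (R : realFieldType) (x y z : pt R) :
  crossv x y = 0 -> crossv y z = 0 -> y != (0, 0) -> crossv x z = 0.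
Proof.
case: x => x1 x2; case: y => y1 y2; case: z => z1 z2; rewrite /crossv /= => h1 h2 hy.
have e1 : y1 * (x1 * z2 - x2 * z1) = x1 * (y1 * z2 - y2 * z1) + z1 * (x1 * y2 - x2 * y1)
  by ring.
have e2 : y2 * (x1 * z2 - x2 * z1) = x2 * (y1 * z2 - y2 * z1) + z2 * (x1 * y2 - x2 * y1)
  by ring.
rewrite h1 h2 !mulr0 addr0 in e1 e2.
have [//|hd] := eqVneq (x1 * z2 - x2 * z1) 0.
move/eqP: e1; rewrite mulf_eq0 (negbTE hd) orbF => /eqP ez1.
move/eqP: e2; rewrite mulf_eq0 (negbTE hd) orbF => /eqP ez2.
by move: hy; rewrite ez1 ez2 eqxx.
Qed.

Lemma chain (R : realFieldType) (Q : int -> pt R) :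
  (forall i, Q i != (0, 0)) -> (forall i, crossv (Q i) (Q (i + 1)) = 0) ->
  forall i k, crossv (Q i) (Q k) = 0.
Proof.
move=> nz h.
have h0 : forall i (n : nat), crossv (Q i) (Q (i + n)) = 0.
  move=> i; elim=> [|n IH]; first by rewrite addr0 /crossv mulrC subrr.
  have -> : i + n.+1 = (i + n) + 1 by lia.
  exact: trans_par IH (h _) (nz _).
move=> i k.
have [n [hn|hn]] : exists n : nat, k = i + n \/ i = k + n.
  exists `|k - i|%N; case: (lerP i k) => _; lia.
  by rewrite hn.
have hs : forall x y : pt R, crossv x y = - crossv y x.
  by move=> x y; rewrite /crossv opprB [x.1 * _]mulrC [x.2 * _]mulrC.
by rewrite hn hs h0 oppr0.
Qed.

Theorem proposition4p12 (R : realFieldType) (P : int -> 'I_2 -> pt R) :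
  circular_net P ->
  generic_net P ->
  (forall j : 'I_2, on_a_line (fun i => P i j)) ->
  (forall i k : int,
      parallel_lines (P (2 * i) j1) (P (2 * i) j2) (P (2 * k) j1) (P (2 * k) j2)) /\
  (forall i k : int,
      parallel_lines (P (2 * i + 1) j1) (P (2 * i + 1) j2)
                     (P (2 * k + 1) j1) (P (2 * k + 1) j2)).
Proof.
move=> hc hg hl.
have [p1 [u1 [hu1 hl1]]] := hl j1.
have [p2 [u2 [hu2 hl2]]] := hl j2.
have nz : forall i, sub (P i j2) (P i j1) != (0, 0).
  by move=> i; apply/eqP => /sub0_eq /hg [_ /(congr1 val)].
have st : forall i, crossv (sub (P i j2) (P i j1))
                           (sub (P (i + 2) j2) (P (i + 2) j1)) = 0.
  move=> i.
  have [a ea] := hl1 i; have [b eb] := hl1 (i + 1); have [c ec] := hl1 (i + 2).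
  have [d ed] := hl2 i; have [e ee] := hl2 (i + 1); have [f ef] := hl2 (i + 2).
  have ea' : P i j1 = lp p1 u1 a := ea.
  have eb' : P (i + 1) j1 = lp p1 u1 b := eb.
  have ec' : P (i + 2) j1 = lp p1 u1 c := ec.
  have ed' : P i j2 = lp p2 u2 d := ed.
  have ee' : P (i + 1) j2 = lp p2 u2 e := ee.
  have ef' : P (i + 2) j2 = lp p2 u2 f := ef.
  have [o [r [_ [h1 [h2 [h3 h4]]]]]] := hc i.
  have [o' [r' [_ [h1' [h2' [h3' h4']]]]]] := hc (i + 1).
  rewrite (_ : i + 1 + 1 = i + 2) in h2' h3'; last by lia.
  have hneq : forall k l (j : 'I_2), k != l -> P k j != P l j.
    by move=> k l j hkl; apply/eqP => /hg [/eqP]; rewrite (negbTE hkl).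
  rewrite ea' ec' ed' ef'; apply: (@step R p1 p2 u1 u2 a b c d e f hu1 hu2).
  - by rewrite -ea' -eb' -ee' -ed'; apply: cyc_im h1 h2 h3 h4.
  - by rewrite -eb' -ec' -ef' -ee'; apply: cyc_im h1' h2' h3' h4'.
  - by rewrite -ea' -eb'; apply: hneq; apply/eqP; lia.
  - by rewrite -ec' -eb'; apply: hneq; apply/eqP; lia.
  - by rewrite -ed' -ee'; apply: hneq; apply/eqP; lia.
  - by rewrite -ee' -ef'; apply: hneq; apply/eqP; lia.
  - by rewrite -eb' -ee'; apply/eqP => /hg [_ /(congr1 val)].
split=> i k.
- have := @chain R (fun i => sub (P (2 * i) j2) (P (2 * i) j1)) (fun i => nz _) _ i k.
  apply=> l; rewrite (_ : 2 * (l + 1) = 2 * l + 2); last by lia.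
  exact: st.
- have := @chain R (fun i => sub (P (2 * i + 1) j2) (P (2 * i + 1) j1)) (fun i => nz _) _ i k.
  apply=> l; rewrite (_ : 2 * (l + 1) + 1 = 2 * l + 1 + 2); last by lia.
  exact: st.
Qed.
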